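(* Let $n\ge 3$ and let $G$ be a graph on $2n$ vertices with at least $n^2-1$ edges that contains no two distinct vertices of the same degree joined by a path of length three. Let $\beta$ be the largest integer such that $G$ contains two distinct vertices of degree $\beta$. Then $\beta\le n+1$. In particular, if $\beta=n+1$, then $G$ is isomorphic to $K_{n+1,n-1}$.
   Context: A path of length three joining vertices $a$ and $b$ is a path $a\,x\,y\,b$ with four distinct vertices and three edges. Graphs are finite and simple. *)

(* Defs.v *)
From mathcomp Require Import all_boot.
Set Implicit Arguments. Unset Strict Implicit. Unset Printing Implicit Defensive.

Definition simple_graph (T : finType) (e : rel T) : Prop :=
  symmetric e /\ irreflexive e.

Definition edges (T : finType) (e : rel T) : {set {set T}} :=
  [set [set x; y] | x in T, y in T & e x y].

Definition deg (T : finType) (e : rel T) (x : T) : nat := #|[set y | e x y]|.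

Definition path3 (T : finType) (e : rel T) (a b : T) : bool :=
  [exists x : T, exists y : T, [&& uniq [:: a; x; y; b], e a x, e x y & e y b]].

Definition graph_iso (T U : finType) (e : rel T) (f : rel U) : Prop :=
  exists g : T -> U, bijective g /\ forall x y, e x y = f (g x) (g y).

Definition Kbip (p q : nat) : rel ('I_p + 'I_q)%type :=
  fun u v => match u, v with
             | inl _, inr _ | inr _, inl _ => true
             | _, _ => false
             end.
Arguments Kbip p q : clear implicits.

(* Main.v *)
Require Import Defs.
From mathcomp Require Import all_boot zify.
Set Implicit Arguments. Unset Strict Implicit. Unset Printing Implicit Defensive.

Lemma card_inj_bound (T : finType) (X : {set T}) (f : T -> nat) k :
  {in X &, injective f} -> (forall x, x \in X -> f x <= k) -> #|X| <= k.+1.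
Proof.
move=> inj hk.
pose g := fun x => (inord (f x) : 'I_k.+1).
have ginj : {in X &, injective g}.
  move=> x y hx hy; rewrite /g => /(congr1 val) /=; rewrite !inordK ?ltnS ?hk //.
  exact: inj.
rewrite -(card_in_imset ginj); apply: leq_trans (max_card _) _; by rewrite card_ord.
Qed.

Lemma sum_min (D d : nat) : \sum_(j < D) (j < d) = minn d D.
Proof.
elim: D => [|D IH]; first by rewrite big_ord0; lia.
rewrite big_ord_recr /= IH; case: (ltnP D d) => h; lia.
Qed.

Lemma card_sum_rel (T : finType) (e : rel T) v (Z : {set T}) :
  #|[set w | e v w] :&: Z| = \sum_(w in Z) (e v w : nat).
Proof.
rewrite -sum1_card big_mkcond [RHS]big_mkcond /=; apply: eq_bigr => w _.
by rewrite !inE; case: (w \in Z); case: (e v w).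
Qed.

Lemma dcount (T : finType) (e : rel T) (X Y : {set T}) : symmetric e ->
  \sum_(v in X) #|[set w | e v w] :&: Y| = \sum_(w in Y) #|[set v | e w v] :&: X|.
Proof.
move=> sym.
under eq_bigr do rewrite card_sum_rel.
under [RHS]eq_bigr do rewrite card_sum_rel.
rewrite exchange_big /=; apply: eq_bigr => w _; apply: eq_bigr => v _.
by rewrite sym.
Qed.

Lemma deg_sum (T : finType) (e : rel T) x : deg e x = \sum_y (e x y : nat).
Proof.
rewrite /deg -sum1_card big_mkcond [RHS]big_mkcond /=; apply: eq_bigr => y _.
by rewrite inE; case: (e x y).
Qed.

Lemma edges_deg (T : finType) (e : rel T) : simple_graph e ->
  2 * #|edges e| <= \sum_x deg e x.
Proof.
case=> sym irr.
have -> : \sum_x deg e x = \sum_(p : T * T | e p.1 p.2) 1.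
  under eq_bigr do rewrite deg_sum.
  rewrite (pair_big xpredT xpredT (fun x y => (e x y : nat))) /=.
  rewrite [RHS]big_mkcond /=; apply: eq_bigr => p _; by case: (e p.1 p.2).
rewrite (partition_big (fun p : T * T => [set p.1; p.2]) (mem (edges e))) /=; last first.
  move=> [x y] /= exy; apply/imset2P; exists x y => //; by rewrite inE.
rewrite mulnC -sum_nat_const; apply: leq_sum => E.
case/imset2P => x y _; rewrite inE => /andP[_ exy] ->.
rewrite sum1dep_card.
have -> : 2 = #|[set (x, y); (y, x)]|.
  rewrite cards2; case: eqP => // [[h _]]; by move: exy; rewrite h irr.
apply: subset_leq_card; apply/subsetP => p; rewrite !inE.
case/orP => /eqP -> /=.
  by rewrite exy eqxx.
  rewrite sym exy /=.

by apply/eqP; apply/setP => z; rewrite !inE orbC.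
Qed.


Lemma iso_build (T : finType) (e : rel T) (C : {set T}) p q :
  #|C| = p -> #|~: C| = q ->
  (forall x y, e x y = (x \in C) (+) (y \in C)) -> graph_iso e (Kbip p q).
Proof.
move=> hp hq he.
pose h (u : ('I_p + 'I_q)%type) : T :=
  match u with
  | inl i => @enum_val T (pred_of_set C) (cast_ord (esym hp) i)
  | inr j => @enum_val T (pred_of_set (~: C)) (cast_ord (esym hq) j)
  end.
have hC : forall u, (h u \in C) = is_inl u.
  case=> [i|j] /=; first exact: (enum_valP (cast_ord (esym hp) i)).
  by have := enum_valP (A := pred_of_set (~: C)) (cast_ord (esym hq) j); rewrite inE => /negbTE.
have hinj : injective h.
  case=> [i|j] [i'|j'] /= E.
  - by congr inl; apply: (cast_ord_inj (eq_n := esym hp)); apply: enum_val_inj.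
  - by move: (hC (inl i)) (hC (inr j')); rewrite /= E => ->.
  - by move: (hC (inr j)) (hC (inl i')); rewrite /= E => ->.
  - by congr inr; apply: (cast_ord_inj (eq_n := esym hq)); apply: enum_val_inj.
have hbij : bijective h.
  apply: (inj_card_bij hinj); rewrite card_sum !card_ord -hp -hq cardsC //.
case: hbij => g hg gh.
exists g; split; first by exists h.
move=> x y; rewrite -{1}(gh x) -{1}(gh y) he !hC.
by case: (g x) => ?; case: (g y) => ?.
Qed.


Lemma path3_intro (T : finType) (e : rel T) u x y v :
  uniq [:: u; x; y; v] -> e u x -> e x y -> e y v -> path3 e u v.
Proof.
move=> U h1 h2 h3; apply/existsP; exists x; apply/existsP; exists y.
by rewrite U h1 h2 h3.
Qed.

Lemma uniq4 (T : eqType) (u x y v : T) :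
  u != x -> u != y -> u != v -> x != y -> x != v -> y != v -> uniq [:: u; x; y; v].
Proof. move=> h1 h2 h3 h4 h5 h6; by rewrite /= !inE !negb_or h1 h2 h3 h4 h5 h6. Qed.

Lemma edge_neq (T : finType) (e : rel T) u v : irreflexive e -> e u v -> u != v.
Proof. by move=> irr; apply: contraTneq => ->; rewrite irr. Qed.

Lemma adj_case (n : nat) (T : finType) (e : rel T) (beta : nat) (a b : T) :
  simple_graph e -> #|T| = 2 * n ->
  (forall u v : T, u != v -> deg e u = deg e v -> ~~ path3 e u v) ->
  a != b -> deg e a = beta -> deg e b = beta -> e a b -> beta <= n.
Proof.
case=> sym irr hT hP ab da db eab.
set A := [set w | e a w] :\ b; set B := [set w | e b w] :\ a.
set C := A :&: B; set S := ~: (A :|: B).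
have F1 : forall x y, x \in A -> y \in B -> e x y -> False.
  move=> x y; rewrite !inE => /andP[xb ax] /andP[ya byy] exy.
  have := hP a b ab (etrans da (esym db)); apply/negP/negPn.
  apply: (path3_intro (x := x) (y := y)) => //; last by rewrite sym.
  apply: uniq4 => //.
  - exact: (edge_neq irr).
  - by rewrite eq_sym.
  - exact: (edge_neq irr).
  - by rewrite eq_sym (edge_neq irr byy).
have NS : forall x w, x \in C -> e x w -> w \in S.
  move=> x w; rewrite inE => /andP[xA xB] exw; rewrite in_setC in_setU negb_or.
  apply/andP; split; apply/negP => wX.
  - by apply: (F1 w x) => //; rewrite sym.
  - exact: (F1 x w).
have aS : a \in S by rewrite !inE !negb_or irr eqxx !andbF.
have bS : b \in S by rewrite !inE !negb_or irr eqxx !andbF.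
have s2 : 2 <= #|S|.
  have <- : #|[set a; b]| = 2 by rewrite cards2 ab.
  by apply: subset_leq_card; apply/subsetP => z; rewrite in_set2 => /orP[] /eqP ->.
have degC : forall x, x \in C -> 2 <= deg e x <= #|S|.
  move=> x xC; apply/andP; split.
    have <- : #|[set a; b]| = 2 by rewrite cards2 ab.
    apply: subset_leq_card; apply/subsetP => z; rewrite in_set2 => /orP[] /eqP ->.
      by rewrite inE sym; move: xC; rewrite !inE => /andP[/andP[_ ->]].
    by rewrite inE sym; move: xC; rewrite !inE => /andP[_ /andP[_ ->]].
  apply: subset_leq_card; apply/subsetP => z; rewrite inE; exact: NS.
have cb : #|C| <= (#|S| - 2).+1.
  apply: (card_inj_bound (f := fun x => deg e x - 2)); last first.
    by move=> x /degC; lia.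
  move=> x y xC yC E; apply/eqP; apply/negPn/negP => nxy.
  have dxy : deg e x = deg e y by move: (degC x xC) (degC y yC); lia.
  have := hP x y nxy dxy; apply/negP/negPn.
  move: xC yC; rewrite !inE => /andP[/andP[xb ax] /andP[xa bx]] /andP[/andP[yb ay] /andP[ya byy]].
  apply: (path3_intro (x := a) (y := b)) => //; last by rewrite sym.
  by apply: uniq4 => //; rewrite eq_sym.
have hA : #|A| + 1 = beta.
  by rewrite -da /deg (cardsD1 b [set w | e a w]) inE eab addnC.
have hB : #|B| + 1 = beta.
  by rewrite -db /deg (cardsD1 a [set w | e b w]) inE sym eab addnC.
have hU := cardsUI A B.
have hS := cardsC (A :|: B).
rewrite hT -/S in hS.
rewrite -/C in hU; lia.
Qed.


Lemma card_split (T : finType) (C : {set T}) (P : pred T) :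
  #|[set x in C | P x]| + #|[set x in C | ~~ P x]| = #|C|.
Proof.
rewrite -(cardsID [set x | P x] C); congr (_ + _); apply: eq_card => z; by rewrite !inE andbC.
Qed.

Lemma sum_tri (D c : nat) : D <= c ->
  2 * (\sum_(j < D) (c - j.+1)) + D * D.+1 = 2 * D * c.
Proof.
elim: D => [|D IH] h; first by rewrite big_ord0.
rewrite big_ord_recr /=; have := IH (ltnW h); set X := \sum_(j < D) _; nia.
Qed.

Lemma sum_pred_card (T : finType) (C : {set T}) (P : pred T) :
  \sum_(x in C) (P x : nat) = #|[set x in C | P x]|.
Proof.
rewrite -sum1_card big_mkcond [RHS]big_mkcond /=; apply: eq_bigr => z _.
by rewrite !inE; case: (z \in C); case: (P z).
Qed.

Lemma claimA (T : finType) (e : rel T) (S C : {set T}) :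
  symmetric e ->
  (forall x, x \in C -> #|S :\: [set w | e x w]| + 2 <= #|S|) ->
  (forall x y u z, x \in C -> y \in C -> x != y ->
     #|S :\: [set w | e x w]| = #|S :\: [set w | e y w]| ->
     u \in S -> z \in S -> e x u -> e u z -> e z y -> False) ->
  #|S| + 2 <= #|C| ->
  \sum_(u in S) #|[set w | e u w] :&: S| <= 2 * \sum_(x in C) #|S :\: [set w | e x w]| /\
  (0 < \sum_(u in S) #|[set w | e u w] :&: S| ->
   \sum_(u in S) #|[set w | e u w] :&: S| < 2 * \sum_(x in C) #|S :\: [set w | e x w]|).
Proof.
move=> sym hdd F5 hc.
pose dd x := #|S :\: [set w | e x w]|.
set M := \sum_(u in S) _; set Sd := \sum_(x in C) _.
set s := #|S|; set c := #|C|.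
move: hc; rewrite -/s -/c => hc.
pose cnt j := #|[set x in C | dd x <= j]|.
have s2 : 2 <= s.
  have : 0 < c by rewrite /c; lia.
  by case/card_gt0P => x /hdd; rewrite /s; lia.
have cnts : cnt (s - 2) = c.
  rewrite /cnt /c; apply: eq_card => z; rewrite inE; case zC: (z \in C) => //=.
  by have := hdd z zC; rewrite /dd /s; lia.
have exP : exists j, j + 2 <= cnt j.
  by exists (s - 2); rewrite cnts /c; lia.
case: (ex_minnP exP) => D hD minD.
have hlt : forall j, j < D -> cnt j <= j.+1.
  move=> j jD; rewrite leqNgt; apply/negP => h.
  by have := minD j; rewrite addn2 => /(_ h); lia.
have Ds : D + 2 <= s.
  have := minD (s - 2); rewrite cnts /c; lia.
have K2 : 1 < #|[set x in C | dd x == D]|.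
  have h1 : #|[set x in C | dd x < D]| <= D.
    move: hlt; case: (D) => [|D'] hl.
      by rewrite leqn0 cards_eq0; apply/eqP/setP => z; rewrite !inE ltn0 andbF.
    have := hl D' (ltnSn _); rewrite /cnt.
    by rewrite (eq_card (B := [set x in C | dd x < D'.+1])) // => z; rewrite !inE ltnS.
  have h2 : cnt D <= #|[set x in C | dd x == D] :|: [set x in C | dd x < D]|.
    apply: subset_leq_card; apply/subsetP => z; rewrite !inE.
    by case/andP => -> /=; rewrite leq_eqVlt.
  have := cardsUI [set x in C | dd x == D] [set x in C | dd x < D].
  lia.
case/card_gt1P: K2 => x [y [xK yK nxy]].
move: xK yK; rewrite !inE => /andP[xC /eqP dx] /andP[yC /eqP dy].
have Sdlb : 2 * D * c <= 2 * Sd + D * D.+1.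
  have h : \sum_(j < D) (c - j.+1) <= Sd.
    apply: leq_trans (_ : _ <= \sum_(z in C) minn (dd z) D) _; last first.
      by apply: leq_sum => z _; rewrite geq_minl.
    under [X in _ <= X]eq_bigr do rewrite -sum_min.
    rewrite exchange_big /=; apply: leq_sum => j _.
    rewrite sum_pred_card.
    have := card_split C (fun z => dd z <= j).
    have := hlt j (ltn_ord j).
    rewrite /cnt /c.
    have -> : [set x in C | j < dd x] = [set x in C | ~~ (dd x <= j)].
      by apply/setP => z; rewrite !inE ltnNge.
    lia.
  have := sum_tri (D := D) (c := c); lia.
pose Dl := (S :\: [set w | e x w]) :&: (S :\: [set w | e y w]).
have dxy : #|S :\: [set w | e x w]| = #|S :\: [set w | e y w]|.
  by move: dx dy; rewrite /dd => -> ->.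
have hM : M <= #|S :&: Dl| * s + #|S :\: Dl| * D.
  rewrite /M (big_setID Dl) /=; apply: leq_add.
    rewrite -sum_nat_const; apply: leq_sum => u _.
    by apply: subset_leq_card; apply: subsetIr.
  rewrite -sum_nat_const; apply: leq_sum => u; rewrite !inE => /andP[uD uS].
  move: uD; rewrite uS /= !andbT negb_and !negbK.
  case uNx: (e x u) => /= uNy.
    rewrite -dy; apply: subset_leq_card; apply/subsetP => z; rewrite !inE.
    case/andP => euz zS; rewrite zS andbT; apply/negP => eyz.
    by apply: (F5 x y u z) => //; rewrite sym.
  rewrite -dx; apply: subset_leq_card; apply/subsetP => z; rewrite !inE.
  case/andP => euz zS; rewrite zS andbT; apply/negP => exz.
  by apply: (F5 y x u z) => //; rewrite 1?eq_sym // 1?sym.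
have hsplit := cardsID Dl S.
have hdl : #|S :&: Dl| <= D.
  rewrite -dx; apply: subset_leq_card; apply/subsetP => z; rewrite !inE.
  by case/and3P => _ /andP[-> ->].
rewrite -/s in hsplit.
have key : #|S :&: Dl| * (s - D) <= D * (s - D) by apply: leq_mul.
case: D hD minD hlt Ds dx dy Sdlb hM hdl key => [|D] *.
  split; first nia. nia.
split; nia.
Qed.


Lemma sum_splitC (T : finType) (W : {set T}) (F : T -> nat) :
  \sum_x F x = \sum_(x in ~: W) F x + \sum_(x in W) F x.
Proof.
rewrite (bigID (mem W)) /= addnC; congr (_ + _); apply: eq_bigl => x; by rewrite !inE.
Qed.

Lemma deg_splitC (T : finType) (e : rel T) (W : {set T}) v :
  deg e v = #|[set w | e v w] :&: ~: W| + #|[set w | e v w] :&: W|.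
Proof. by rewrite /deg -(cardsID (~: W) [set w | e v w]) setDE setCK. Qed.

Lemma sum_nat_0 (T : finType) (C : {set T}) (F : T -> nat) :
  \sum_(x in C) F x = 0 -> forall x, x \in C -> F x = 0.
Proof.
move/eqP; rewrite sum_nat_eq0 => /forallP h x xC.
by have := h x; rewrite xC => /eqP.
Qed.

Lemma arith n beta c s t M Sd Tot :
 Tot + 2*Sd <= M + 2*(c*s) + 4*(t*s) + 2*(t*t) ->
 s + c + 2*t = 2*n -> beta = c + t -> 2*(n^2-1) <= Tot ->
 M <= 2*Sd -> (0 < M -> M < 2*Sd) -> n.+1 <= beta ->
 [/\ beta = n.+1, t = 0, M = 0 & Sd = 0].
Proof.
move=> h1 h2 h3 h4 h5 h6 h7.
have [r hr] : exists r, beta = n.+1 + r by exists (beta - n.+1); lia.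
have hn : n = s + 1 + r + t by lia.
have hc : c = s + 2 + 2 * r by lia.
subst n c beta.
have e1 : (s + 1 + r + t) ^ 2 = s*s + 2*(s*r) + 2*(s*t) + 2*s + r*r + 2*(r*t) + 2*r + t*t + 2*t + 1 by nia.
have e2 : (s + 2 + 2*r) * s = s*s + 2*s + 2*(s*r) by nia.
rewrite e1 in h4; rewrite e2 in h1.
have ht : r + t = 0.
  have : 2 * (r*r) + 4*(r*t) + 4*r + 4*t + 2 * Sd <= M by lia.
  lia.
have hr0 : r = 0 by lia.
have ht0 : t = 0 by lia.
subst r t.
have hM : M = 0.
  case: (posnP M) => // Mp; have := h6 Mp; lia.
split => //; lia.
Qed.

Lemma nonadj_case (n : nat) (T : finType) (e : rel T) (beta : nat) (a b : T) :
  simple_graph e -> #|T| = 2 * n -> 2 * (n ^ 2 - 1) <= \sum_x deg e x ->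
  (forall u v : T, u != v -> deg e u = deg e v -> ~~ path3 e u v) ->
  a != b -> deg e a = beta -> deg e b = beta -> ~~ e a b -> n.+1 <= beta ->
  beta = n.+1 /\ graph_iso e (Kbip (n + 1) (n - 1)).
Proof.
case=> sym irr hT hsum hP ab da db nab hb.
set A := [set w | e a w]; set B := [set w | e b w].
set C := A :&: B; set W := A :|: B; set S := ~: W.
have F1 : forall x y, x \in A -> y \in B -> e x y -> False.
  move=> x y; rewrite !inE => ax byy exy.
  have := hP a b ab (etrans da (esym db)); apply/negP/negPn.
  apply: (path3_intro (x := x) (y := y)) => //; last by rewrite sym.
  apply: uniq4 => //.
  - exact: (edge_neq irr).
  - by apply: contraNneq nab => ->; rewrite sym.
  - exact: (edge_neq irr).
  - by apply: contraNneq nab => <-.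
  - by rewrite eq_sym; exact: (edge_neq irr).
have NS : forall x w, x \in C -> e x w -> w \in S.
  move=> x w; rewrite inE => /andP[xA xB] exw; rewrite in_setC in_setU negb_or.
  apply/andP; split; apply/negP => wX.
  - by apply: (F1 w x) => //; rewrite sym.
  - exact: (F1 x w).
have aS : a \in S by rewrite !inE negb_or irr sym (negbTE nab).
have bS : b \in S by rewrite !inE negb_or irr (negbTE nab).
have CS : forall x, x \in C -> x \notin S.
  by move=> x; rewrite !inE negbK => /andP[-> _].
have degS : forall x, x \in C -> deg e x + #|S :\: [set w | e x w]| = #|S|.
  move=> x xC; rewrite -(cardsID [set w | e x w] S) /deg; congr (_ + _).
  apply: eq_card => z; rewrite !inE andbC; case exz: (e x z) => //=.
  by have := NS x z xC exz; rewrite !inE => ->.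
have hA : #|A| = beta by [].
have hB : #|B| = beta by [].
have hU := cardsUI A B.
have hS := cardsC W.
rewrite hT -/W -/C -/S hA hB in hU hS.
have hdd : forall x, x \in C -> #|S :\: [set w | e x w]| + 2 <= #|S|.
  move=> x xC.
  have h1 : #|S :\: [set w | e x w]| <= #|S :\: [set a; b]|.
    apply: subset_leq_card; apply/subsetP => z; rewrite !inE.
    case/andP => h ->; rewrite andbT; apply: contra h => /orP[] /eqP ->;
      move: xC; rewrite !inE sym => /andP[h1 h2] //; by rewrite sym.
  have := cardsID [set a; b] S.
  have -> : S :&: [set a; b] = [set a; b].
    by apply/setIidPr/subsetP => z; rewrite in_set2 => /orP[] /eqP ->.
  by rewrite cards2 ab; lia.
have F5 : forall x y u z, x \in C -> y \in C -> x != y ->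
     #|S :\: [set w | e x w]| = #|S :\: [set w | e y w]| ->
     u \in S -> z \in S -> e x u -> e u z -> e z y -> False.
  move=> x y u z xC yC nxy dxy uS zS exu euz ezy.
  have dg : deg e x = deg e y.
    by have := degS x xC; have := degS y yC; rewrite dxy; lia.
  have := hP x y nxy dg; apply/negP/negPn.
  apply: (path3_intro (x := u) (y := z)) => //.
  apply: uniq4 => //.
  - exact: (edge_neq irr).
  - by apply: contraNneq (CS x xC) => ->.
  - exact: (edge_neq irr).
  - by apply: contraNneq (CS y yC) => <-.
  - exact: (edge_neq irr).
have hc : #|S| + 2 <= #|C| by lia.
have [cA1 cA2] := claimA sym hdd F5 hc.
have CW : C \subset W by apply: subset_trans (subsetIl _ _) (subsetUl _ _).
have WC : W :&: C = C by apply/setIidPr.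
have tot : \sum_x deg e x =
   \sum_(u in S) #|[set w | e u w] :&: S| + 2 * \sum_(v in W) #|[set w | e v w] :&: S|
   + \sum_(v in W) #|[set w | e v w] :&: W|.
  rewrite (sum_splitC W) -/S.
  under eq_bigr do rewrite (deg_splitC _ W) -/S.
  under [X in _ + X]eq_bigr do rewrite (deg_splitC _ W) -/S.
  rewrite !big_split /= (@dcount _ e S W sym); lia.
have hX : \sum_(v in W) #|[set w | e v w] :&: S| =
   \sum_(v in C) #|[set w | e v w] :&: S| + \sum_(v in W :\: C) #|[set w | e v w] :&: S|.
  by rewrite (big_setID C) /= WC.
have hXc : \sum_(v in C) #|[set w | e v w] :&: S| + \sum_(x in C) #|S :\: [set w | e x w]|
    = #|C| * #|S|.
  rewrite -big_split -sum_nat_const; apply: eq_bigr => v _.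
  by rewrite /= (setIC [set w | e v w] S) cardsID.
have hXr : \sum_(v in W :\: C) #|[set w | e v w] :&: S| <= #|W :\: C| * #|S|.
  rewrite -sum_nat_const; apply: leq_sum => v _.
  by apply: subset_leq_card; apply: subsetIr.
have hAB := cardsID B A.
have hBA := cardsID A B.
rewrite setIC -/C in hBA.
rewrite -/C in hAB.
have hY : \sum_(v in W) #|[set w | e v w] :&: W| <= #|W :\: C| * (beta - #|C|).
  rewrite (big_setID C) /= WC.
  rewrite big1 => [|v vC]; last first.
    apply/eqP; rewrite cards_eq0; apply/eqP/setP => z; rewrite !inE.
    apply/negP => /andP[exz zW].
    by have := NS v z vC exz; rewrite !inE zW.
  rewrite add0n -sum_nat_const; apply: leq_sum => v.
  rewrite in_setD => /andP[vC vW].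
  move: vW; rewrite in_setU => /orP[vA|vB].
    have vB : v \notin B by apply: contra vC => vB; rewrite in_setI vA vB.
    have <- : #|A :\: B| = beta - #|C| by lia.
    apply: subset_leq_card; apply/subsetP => z; rewrite in_setI in_setD inE.
    case/andP => exz; rewrite in_setU => /orP[zA|zB].
      rewrite zA andbT; apply/negP => zB; exact: (F1 v z).
    by case: (F1 v z).
  have vA : v \notin A by apply: contra vC => vA; rewrite in_setI vA vB.
  have <- : #|B :\: A| = beta - #|C| by lia.
  apply: subset_leq_card; apply/subsetP => z; rewrite in_setI in_setD inE.
  case/andP => exz; rewrite in_setU => /orP[zA|zB].
    by case: (F1 z v) => //; rewrite sym.
  rewrite zB andbT; apply/negP => zA; by case: (F1 z v) => //; rewrite sym.
have hk := cardsID C W.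
rewrite WC in hk.
have hk2 : #|W :\: C| = 2 * (beta - #|C|) by lia.
rewrite hk2 -mulnA in hXr; rewrite hk2 -mulnA in hY.
have H1 : \sum_x deg e x + 2 * \sum_(x in C) #|S :\: [set w | e x w]| <=
  \sum_(u in S) #|[set w | e u w] :&: S| + 2 * (#|C| * #|S|) + 4 * ((beta - #|C|) * #|S|)
  + 2 * ((beta - #|C|) * (beta - #|C|)).
  rewrite tot hX.
  move: hXr hY hXc; set P1 := (beta - #|C|) * #|S|; set P2 := (beta - #|C|) * (beta - #|C|).
  set P3 := #|C| * #|S|; lia.
have [hbeta ht hM hSd] := arith (n := n) (beta := beta) (c := #|C|) (s := #|S|)
   (t := beta - #|C|) (Tot := \sum_x deg e x) H1 ltac:(lia) ltac:(lia)
   hsum cA1 cA2 hb.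
split => //.
have hcb : #|C| <= beta by rewrite -hA; apply: subset_leq_card; apply: subsetIl.
have hcC : #|C| = n + 1 by lia.
have hcC' : #|~: C| = n - 1 by have := cardsC C; rewrite hT; lia.
have WsubC : forall x, x \in W -> x \in C.
  move=> x xW; apply/negPn/negP => xC.
  have : #|W :\: C| == 0 by apply/eqP; lia.
  by rewrite cards_eq0 => /eqP/setP/(_ x); rewrite !in_setD xW xC inE.
have notCS : forall x, x \notin C -> x \in S.
  move=> x xC; rewrite /S in_setC; apply: contra xC; exact: WsubC.
have Cfull : forall x z, x \in C -> z \in S -> e x z.
  move=> x z xC zS; have := sum_nat_0 hSd xC => /eqP; rewrite cards_eq0 => /eqP/setP/(_ z).
  by rewrite !in_setD zS inE andbT in_set0 => /negbFE.
have Sempty : forall u z, u \in S -> z \in S -> e u z = false.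
  move=> u z uS zS; have := sum_nat_0 hM uS => /eqP; rewrite cards_eq0 => /eqP/setP/(_ z).
  by rewrite in_setI zS inE andbT in_set0.
apply: (iso_build (C := C)) => // x y.
case xC: (x \in C); case yC: (y \in C) => /=.
- apply/negP => exy; have := NS x y xC exy; by rewrite (negbTE (CS y yC)).
- by apply: Cfull => //; apply: notCS; rewrite yC.
- by rewrite sym; apply: Cfull => //; apply: notCS; rewrite xC.
- by apply: Sempty; apply: notCS; rewrite ?xC ?yC.
Qed.


Theorem lemma3p1 (n : nat) (T : finType) (e : rel T) (beta : nat) :
  3 <= n ->
  simple_graph e ->
  #|T| = 2 * n ->
  n ^ 2 - 1 <= #|edges e| ->
  (forall a b : T, a != b -> deg e a = deg e b -> ~~ path3 e a b) ->
  (exists a b : T, [/\ a != b, deg e a = beta & deg e b = beta]) ->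
  (forall a b : T, a != b -> deg e a = deg e b -> deg e a <= beta) ->
  beta <= n + 1 /\ (beta = n + 1 -> graph_iso e (Kbip (n + 1) (n - 1))).
Proof.
move=> n3 sg hT hE hP [a [b [ab da db]]] _.
have hsum : 2 * (n ^ 2 - 1) <= \sum_x deg e x.
  by apply: leq_trans (edges_deg sg); rewrite leq_mul2l hE orbT.
have key : n.+1 <= beta -> beta = n.+1 /\ graph_iso e (Kbip (n + 1) (n - 1)).
  move=> hb; case eab: (e a b).
    by have := adj_case sg hT hP ab da db eab; lia.
  exact: (nonadj_case sg hT hsum hP ab da db (negbT eab) hb).
split.
  case: (leqP beta (n + 1)) => // h.
  by have := key ltac:(lia); lia.
move=> hbn; have [_ iso] := key ltac:(lia); exact: iso.
Qed.
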